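(* Let $E$ be a nonzero real Banach space and $f\colon E\to\,]{-}\infty,\infty]$ be proper, convex and lower semicontinuous. Then $(\partial f)^{\mathbb F}=\partial(f^* )$, i.e. for all $(y^*,y^{**})\in E^*\times E^{**}$, $(y^*,y^{**})\in G((\partial f)^{\mathbb F})$ if and only if $f^*(y^* )+f^{**}(y^{**})=\langle y^*,y^{**}\rangle$.
   Context: $E^*$, $E^{**}$ are the dual and bidual, with pairings $\langle x,x^*\rangle$ and $\langle x^*,x^{**}\rangle$. $f^*(x^* )=\sup_{x\in E}[\langle x,x^*\rangle-f(x)]$, $f^{**}(x^{**})=\sup_{x^*\in E^*}[\langle x^*,x^{**}\rangle-f^*(x^* )]$; $x^*\in\partial f(x)$ iff $f(x)+f^*(x^* )=\langle x,x^*\rangle$. (The multifunction $\partial f$ is closed, monotone and quasidense, so its Fitzpatrick extension is defined.) For a multifunction $S\colon E\rightrightarrows E^*$ with nonempty graph $G(S)$: closed means $G(S)$ norm-closed; monotone means $\langle s-t,s^*-t^*\rangle\ge0$ on $G(S)$; quasidense means for every $(x,x^* )\in E\times E^*$, $\inf_{(s,s^* )\in G(S)}[\tfrac12\|s-x\|^2+\tfrac12\|s^*-x^*\|^2+\langle s-x,s^*-x^*\rangle]\le0$. Define $\varphi_S(x,x^* )=\sup_{(s,s^* )\in G(S)}[\langle s,x^*\rangle+\langle x,s^*\rangle-\langle s,s^*\rangle]$ on $E\times E^*$; identify $(E\times E^* )^*$ with $E^*\times E^{**}$ via $\langle (x,x^* ),(y^*,y^{**})\rangle=\langle x,y^*\rangle+\langle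 x^*,y^{**}\rangle$, and let $\varphi_S^*$ be the conjugate on $E^*\times E^{**}$. For $S$ closed, monotone and quasidense, one has $\varphi_S^*(y^*,y^{**})\ge\langle y^*,y^{**}\rangle$ everywhere, and the Fitzpatrick extension $S^{\mathbb F}\colon E^*\rightrightarrows E^{**}$ is defined by $(y^*,y^{**})\in G(S^{\mathbb F})$ iff $\varphi_S^*(y^*,y^{**})=\langle y^*,y^{**}\rangle$. *)

(* Defs.v *)
From mathcomp Require Import all_boot all_order all_algebra.
From mathcomp Require Import all_classical all_reals all_analysis.
Set Implicit Arguments. Unset Strict Implicit. Unset Printing Implicit Defensive.
Import Order.TTheory GRing.Theory Num.Theory.
Import numFieldNormedType.Exports.
Local Open Scope classical_set_scope.
Local Open Scope ring_scope.

Section Defs.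
Context {R : realType} {E : normedModType R}.

(* E^* : continuous (= bounded) linear functionals on E, represented as
   functions E -> R satisfying the predicate [is_dual]. *)
Definition is_dual (xs : E -> R) : Prop :=
  (forall (a : R) (x y : E), xs (a *: x + y) = a * xs x + xs y) /\
  exists M : R, forall x : E, `|xs x| <= M * `|x|.

(* E^** : bounded linear functionals on E^*, represented as functions
   (E -> R) -> R; only their values on elements of E^* matter.
   Boundedness = bounded on the unit ball of E^* (dual norm <= 1). *)
Definition is_bidual (xss : (E -> R) -> R) : Prop :=
  (forall (a : R) (xs ys : E -> R), is_dual xs -> is_dual ys ->
     xss (fun x => a * xs x + ys x) = a * xss xs + xss ys) /\
  exists M : R, forall xs : E -> R, is_dual xs ->
     (forall x : E, `|xs x| <= `|x|) -> `|xss xs| <= M.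

Local Open Scope ereal_scope.

Definition proper_fun (f : E -> \bar R) : Prop :=
  (forall x, f x != -oo) /\ exists x, f x != +oo.

Definition convex_efun (f : E -> \bar R) : Prop :=
  forall (x y : E) (t : R), (0 <= t <= 1)%R ->
    f (t *: x + (1 - t) *: y)%R <= t%:E * f x + (1 - t)%:E * f y.

Definition fconj (f : E -> \bar R) (xs : E -> R) : \bar R :=
  ereal_sup [set (xs x)%:E - f x | x in [set: E]].

Definition fbiconj (f : E -> \bar R) (xss : (E -> R) -> R) : \bar R :=
  ereal_sup [set (xss xs)%:E - fconj f xs | xs in is_dual].

Definition subdiff_graph (f : E -> \bar R) (x : E) (xs : E -> R) : Prop :=
  is_dual xs /\ f x + fconj f xs = (xs x)%:E.

Definition fitz (G : E -> (E -> R) -> Prop) (x : E) (xs : E -> R) : \bar R :=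
  ereal_sup [set (ss.2 x + xs ss.1 - ss.2 ss.1)%R%:E |
               ss in [set ss : E * (E -> R) | G ss.1 ss.2]].

Definition fitz_conj (G : E -> (E -> R) -> Prop) (ys : E -> R)
    (yss : (E -> R) -> R) : \bar R :=
  ereal_sup [set (ys p.1 + yss p.2)%R%:E - fitz G p.1 p.2 |
               p in [set p : E * (E -> R) | is_dual p.2]].

Definition fitz_ext_graph (G : E -> (E -> R) -> Prop) (ys : E -> R)
    (yss : (E -> R) -> R) : Prop :=
  fitz_conj G ys yss = (yss ys)%:E.

End Defs.

(* Main.v *)
Require Import Defs.
From mathcomp Require Import all_boot all_order all_algebra.
From mathcomp Require Import all_classical all_reals all_analysis.
From mathcomp Require Import ring lra.
Import Order.TTheory GRing.Theory Num.Theory.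
Import numFieldNormedType.Exports.
Local Open Scope classical_set_scope.
Local Open Scope ring_scope.

Section P1.
Context {R : realType} {E : lmodType R}.

Definition linf (L : E -> R) := forall (a : R) (x y : E), L (a *: x + y) = a * L x + L y.

Lemma linf0 L : linf L -> L 0 = 0.
Proof.
move=> hL; have := hL 1 0 0; rewrite scaler0 addr0 mul1r.
by move=> /(congr1 (fun t => t - L 0)) /=; rewrite subrr addrK => ->.
Qed.

Lemma linfZ L a x : linf L -> L (a *: x) = a * L x.
Proof. by move=> hL; have := hL a x 0; rewrite addr0 linf0 // addr0. Qed.

Lemma linfD L x y : linf L -> L (x + y) = L x + L y.
Proof. by move=> hL; have := hL 1 x y; rewrite scale1r mul1r. Qed.

Lemma linfN L x : linf L -> L (- x) = - L x.
Proof. by move=> hL; rewrite -scaleN1r linfZ // mulN1r. Qed.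

Lemma linfB L x y : linf L -> L (x - y) = L x - L y.
Proof. by move=> hL; rewrite linfD // linfN. Qed.

Definition sublin (q : E -> R) :=
  (forall x y, q (x + y) <= q x + q y) /\ (forall c x, 0 < c -> q (c *: x) <= c * q x).

Lemma sublin0 q : sublin q -> q 0 = 0.
Proof.
move=> [qD qZ]; apply/eqP; rewrite eq_le; apply/andP; split.
  have := qZ 2^-1 0; rewrite scaler0 => /(_ (ltac:(by rewrite invr_gt0))).
  move=> h; have : q 0 * 2 <= q 0 by rewrite -ler_pdivlMr // mulrC.
  by rewrite mulrDr mulr1 -lerBrDl subrr.
by have := qD 0 0; rewrite addr0 -lerBlDl subrr.
Qed.

Lemma sublinZ q c x : sublin q -> 0 <= c -> q (c *: x) = c * q x.
Proof.
move=> hq; rewrite le_eqVlt => /orP[/eqP <-|c0].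
  by rewrite scale0r mul0r sublin0.
apply/eqP; rewrite eq_le; apply/andP; split; first exact: hq.2.
have := hq.2 c^-1 (c *: x); rewrite invr_gt0 => /(_ c0).
by rewrite scalerA mulVf ?gt_eqF // scale1r -ler_pdivrMl ?invr_gt0 // invrK.
Qed.

Lemma sublin_lb q x : sublin q -> - q (- x) <= q x.
Proof.
move=> hq; have := hq.1 x (- x); rewrite subrr sublin0 //.
by rewrite -lerBlDr sub0r.
Qed.

Theorem hahn_banach (p : E -> R) : sublin p ->
  exists L, linf L /\ forall x, L x <= p x.
Proof.
move=> hp.
pose T := {q : E -> R | sublin q /\ forall x, q x <= p x}.
pose t0 : T := exist _ p (conj hp (fun x => lexx _)).
pose Rel := fun q1 q2 : T => `[< forall x, sval q2 x <= sval q1 x >].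
have [] := @ZL_preorder T t0 Rel.
- by move=> q; apply/asboolP => x.
- move=> q1 q2 q3 /asboolP h12 /asboolP h23; apply/asboolP => x.
  exact: le_trans (h23 x) (h12 x).
- move=> A Atot.
  have [[s0 As0]|nA] := pselect (exists s, A s); last first.
    by exists t0 => s As; exfalso; apply: nA; exists s.
  pose g := fun x => inf [set sval s x | s in A].
  have gE x : g x = inf [set sval s x | s in A] by [].
  have glb x : has_lbound [set sval s x | s in A].
    exists (- p (- x)) => _ [s As <-].
    apply: le_trans (sublin_lb _ x (proj1 (svalP s))).
    by rewrite lerN2; apply: (proj2 (svalP s)).
  have gne x : [set sval s x | s in A] !=set0 by exists (sval s0 x), s0.
  have gle x s : A s -> g x <= sval s x.
    by move=> As; apply: ge_inf (glb x) _ _; exists s.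
  have gsub : sublin g.
    split.
    + move=> x y; rewrite -lerBlDr [g x]gE; apply: lb_le_inf (gne x) _ => _ [s1 As1 <-].
      rewrite lerBlDr -lerBlDl [g y]gE; apply: lb_le_inf (gne y) _ => _ [s2 As2 <-].
      rewrite lerBlDr.
      have [/asboolP h|/asboolP h] := Atot s1 s2 As1 As2.
      * apply: le_trans (gle _ _ As2) _; apply: le_trans (proj1 (proj1 (svalP s2)) x y) _.
        by rewrite addrC ?lerD2l ?lerD2r h.
      * apply: le_trans (gle _ _ As1) _; apply: le_trans (proj1 (proj1 (svalP s1)) x y) _.
        by rewrite addrC ?lerD2l ?lerD2r h.
    + move=> c x c0; rewrite mulrC -ler_pdivrMr // [g x]gE.
      apply: lb_le_inf (gne x) _ => _ [s As <-].
      rewrite ler_pdivrMr // mulrC; apply: le_trans (gle _ _ As) _.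
      exact: (proj2 (proj1 (svalP s))).
  have gp x : g x <= p x.
    by apply: le_trans (gle x s0 As0) _; apply: (proj2 (svalP s0)).
  exists (exist _ g (conj gsub gp)) => s As; apply/asboolP => x /=.
  exact: gle.
- move=> [q [qsub qp]] qmax.
  have oddq y : q (- y) = - q y.
    pose q' := fun x => inf [set q (x + t *: y) - t * q y | t in [set t : R | 0 <= t]].
    have q'E x : q' x = inf [set q (x + t *: y) - t * q y | t in [set t : R | 0 <= t]] by [].
    have q'lb x : has_lbound [set q (x + t *: y) - t * q y | t in [set t : R | 0 <= t]].
      exists (- q (- x)) => _ [t t0' <-].
      have := qsub.1 (x + t *: y) (- x); rewrite [_ + - x]addrC addKr sublinZ //.
      move=> h; lra.
    have q'ne x : [set q (x + t *: y) - t * q y | t in [set t : R | 0 <= t]] !=set0.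
      by exists (q (x + 0 *: y) - 0 * q y); exists 0 => //=.
    have q'le x t : 0 <= t -> q' x <= q (x + t *: y) - t * q y.
      by move=> t0'; apply: ge_inf (q'lb x) _ _; exists t.
    have q'sub : sublin q'.
      split.
      + move=> x1 x2; rewrite -lerBlDr [q' x1]q'E; apply: lb_le_inf (q'ne x1) _ => _ [t1 t10 <-].
        rewrite lerBlDr -lerBlDl [q' x2]q'E; apply: lb_le_inf (q'ne x2) _ => _ [t2 t20 <-].
        rewrite lerBlDr.
        apply: le_trans (q'le _ (t1 + t2) (addr_ge0 t10 t20)) _.
        have := qsub.1 (x1 + t1 *: y) (x2 + t2 *: y).
        rewrite scalerDl mulrDl.
        have -> : x1 + t1 *: y + (x2 + t2 *: y) = x1 + x2 + (t1 *: y + t2 *: y).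
          by rewrite addrACA.
        move=> h; lra.
      + move=> c x c0; rewrite mulrC -ler_pdivrMr // [q' x]q'E.
        apply: lb_le_inf (q'ne x) _ => _ [t t0' <-].
        rewrite ler_pdivrMr // mulrC.
        apply: le_trans (q'le _ (c * t) (mulr_ge0 (ltW c0) t0')) _.
        rewrite -scalerA -scalerDr sublinZ ?(ltW c0) //.
        by rewrite mulrBr mulrA.
    have q'p x : q' x <= p x.
      by apply: le_trans (q'le x 0 (lexx _)) _; rewrite scale0r addr0 mul0r subr0.
    have := qmax (exist _ q' (conj q'sub q'p)).
    have : Rel (exist _ q (conj qsub qp)) (exist _ q' (conj q'sub q'p)).
      by apply/asboolP => x /=; apply: le_trans (q'le x 0 (lexx _)) _;
         rewrite scale0r addr0 mul0r subr0.
    move=> H /(_ H) /asboolP /= /(_ (- y)) h.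
    have h2 := le_trans h (q'le (- y) 1 ler01).
    rewrite scale1r addNr sublin0 // mul1r sub0r in h2.
    apply/eqP; rewrite eq_le h2 /=.
    by have := sublin_lb _ (- y) qsub; rewrite opprK => h3; lra.
  exists q; split => //.
  move=> a x y.
  have qD x1 x2 : q (x1 + x2) = q x1 + q x2.
    apply/eqP; rewrite eq_le qsub.1 /=.
    have := qsub.1 (x1 + x2) (- x2); rewrite addrK oddq.
    by rewrite -lerBlDr opprK.
  have qZ c z : q (c *: z) = c * q z.
    have [c0|c0] := leP 0 c; first exact: sublinZ.
    rewrite -[c *: z]opprK -scaleNr oddq sublinZ ?oppr_ge0 ?(ltW c0) //.
    by rewrite mulNr opprK.
  by rewrite qD qZ.
Qed.

End P1.


Section P2.
Context {R : realType} {E : normedModType R}.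

Lemma ereal_fin_le (x : \bar R) (r : R) : x != -oo%E -> (x <= r%:E)%E -> x \is a fin_num.
Proof. by case: x. Qed.
Arguments ereal_fin_le {x r}.

Definition convo (K : E -> \bar R) := forall x y (t : R), (0 < t < 1) ->
  (K (t *: x + (1 - t) *: y)%R <= t%:E * K x + (1 - t)%:E * K y)%E.

Lemma sandwich (K : E -> \bar R) (s : E) (rho : R) : 0 < rho -> convo K ->
  (forall y, K y != -oo%E) -> K s \is a fin_num ->
  (forall y, K s <= K y + (rho * `|y - s|)%R%:E)%E ->
  exists L, linf L /\ (forall y, `|L y| <= rho * `|y|) /\
            forall y, (K s + (L (y - s)%R)%:E <= K y)%E.
Proof.
move=> rho0 cK Kninf Ksfin Kmin.
set Ks := fine (K s).
pose P (y : E) := [set r : R | exists t z, (0 < t) /\ K (s + t *: z) \is a fin_num /\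
   r = ((fine (K (s + t *: z)) - Ks) / t + rho * `|y - z|)].
pose p y := inf (P y).
have pE y : p y = inf (P y) by [].
have Pne y : P y !=set0.
  exists (rho * `|y|), 1%R, 0; rewrite scaler0 addr0; split => //; split => //.
  by rewrite subrr mul0r add0r subr0.
have Plb y : lbound (P y) (- (rho * `|y|)).
  move=> _ [t [z [t0 [kf ->]]]].
  have := Kmin (s + t *: z); rewrite -(fineK kf) -/Ks -(fineK Ksfin) -EFinD lee_fin.
  have -> : s + t *: z - s = t *: z by rewrite addrAC subrr add0r.
  rewrite normrZ gtr0_norm //.
  set k := fine (K (s + t *: z)) => h; rewrite -/Ks in h.
  have hz : (`|z| <= `|y| + `|y - z|).
    by have := ler_distD y z 0; rewrite !subr0 [`|z - y|]distrC addrC.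
  have h1 : (- (rho * `|z|) <= (k - Ks) / t).
    rewrite ler_pdivlMr //; nra.
  have h2 : (- (rho * `|y|) <= - (rho * `|z|) + rho * `|y - z|).
    nra.
  rewrite /=; lra.
have Phl y : has_lbound (P y) by exists (- (rho * `|y|)).
have pup y r : P y r -> (p y <= r) by move=> Pr; apply: ge_inf.
have pnorm y : (p y <= rho * `|y|).
  apply: pup; exists 1%R, 0; rewrite scaler0 addr0; split => //; split => //.
  by rewrite subrr mul0r add0r subr0.
have pK y : K (s + y) \is a fin_num -> (p y <= fine (K (s + y)) - Ks).
  move=> kf; apply: pup; exists 1%R, y; rewrite scale1r; split => //; split => //.
  by rewrite divr1 subrr normr0 mulr0 addr0.
have psub : sublin p.
  split.
  - move=> y1 y2; rewrite -lerBlDr [p y1]pE; apply: lb_le_inf (Pne y1) _.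
    move=> _ [t1 [z1 [t10 [k1f ->]]]].
    rewrite lerBlDr -lerBlDl [p y2]pE; apply: lb_le_inf (Pne y2) _.
    move=> _ [t2 [z2 [t20 [k2f ->]]]].
    rewrite lerBlDr.
    set k1 := fine (K (s + t1 *: z1)); set k2 := fine (K (s + t2 *: z2)).
    pose lam := (t2 / (t1 + t2)).
    pose t := (t1 * t2 / (t1 + t2)).
    have t12 : (0 < t1 + t2) by rewrite addr_gt0.
    have t0 : (0 < t) by rewrite /t divr_gt0 // mulr_gt0.
    have lam01 : (0 < lam < 1).
      apply/andP; split; first by rewrite /lam divr_gt0.
      by rewrite /lam ltr_pdivrMr // mul1r ltrDr.
    have eqpt : lam *: (s + t1 *: z1) + (1 - lam) *: (s + t2 *: z2) = s + t *: (z1 + z2).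
      have e1 : (1 - lam = t1 / (t1 + t2)).
        by rewrite /lam; field; rewrite gt_eqF.
      rewrite e1 !scalerDr !scalerA /lam /t.
      have -> : (t2 / (t1 + t2) * t1 = t1 * t2 / (t1 + t2)) by rewrite mulrC mulrA.
      have -> : (t1 / (t1 + t2) * t2 = t1 * t2 / (t1 + t2)) by rewrite mulrAC.
      rewrite addrACA -scalerDl.
      have -> : (t2 / (t1 + t2) + t1 / (t1 + t2) = 1) by field; rewrite gt_eqF.
      by rewrite scale1r.
    have hc := cK (s + t1 *: z1) (s + t2 *: z2) lam lam01.
    rewrite eqpt -(fineK k1f) -(fineK k2f) -/k1 -/k2 -!EFinM -EFinD in hc.
    have kf := ereal_fin_le (Kninf _) hc.
    apply: (@le_trans _ _ ((fine (K (s + t *: (z1 + z2))) - Ks) / t + rho * `|y1 + y2 - (z1 + z2)|)).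
      by apply: pup; exists t, (z1 + z2); split => //; split.
    have hn : (`|y1 + y2 - (z1 + z2)| <= `|y1 - z1| + `|y2 - z2|).
      by rewrite opprD addrACA ler_normD.
    have hk : ((fine (K (s + t *: (z1 + z2))) - Ks) / t <= (k1 - Ks) / t1 + (k2 - Ks) / t2).
      rewrite -(fineK kf) lee_fin in hc.
      have -> : ((k1 - Ks) / t1 + (k2 - Ks) / t2 = (lam * k1 + (1 - lam) * k2 - Ks) / t).
        by rewrite /lam /t; field; rewrite !gt_eqF //; apply/andP; split.
      by rewrite ler_pM2r ?invr_gt0 // lerD2r.
    have := ler_pM2l rho0 (`|y1 + y2 - (z1 + z2)|) (`|y1 - z1| + `|y2 - z2|).
    rewrite hn => /esym h; move: h; rewrite mulrDr => h; lra.
  - move=> c y c0; rewrite mulrC -ler_pdivrMr // [p y]pE; apply: lb_le_inf (Pne y) _.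
    move=> _ [t [z [t0 [kf ->]]]].
    rewrite ler_pdivrMr //; apply: pup; exists (t / c), (c *: z).
    rewrite scalerA mulrAC -mulrA mulfV ?gt_eqF // mulr1; split; first by rewrite divr_gt0.
    split => //.
    rewrite -scalerBr normrZ gtr0_norm //; field; rewrite !gt_eqF //; apply/andP; split.
have [L [Llin Lp]] := hahn_banach _ psub.
exists L; split => //; split.
  move=> y; rewrite ler_norml; apply/andP; split; last exact: le_trans (Lp y) (pnorm y).
  by rewrite lerNl -linfN //; apply: le_trans (Lp _) _; rewrite -[`|y|]normrN; apply: pnorm.
move=> y; have [kf|] := boolP (K y \is a fin_num).
  have := pK (y - s); rewrite addrC subrK => /(_ kf) h.
  have := le_trans (Lp (y - s)) h.
  rewrite -(fineK kf) -(fineK Ksfin) -EFinD lee_fin -/Ks; lra.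
rewrite fin_numE Kninf /= negbK => /eqP ->; exact: leey.
Qed.

End P2.


Section P3.
Context {R : realType} {E : completeNormedModType R}.

Lemma ball_lt (x y : E) (r : R) : ball x r y -> `|x - y| < r.
Proof. by rewrite -ball_normE. Qed.

Lemma lt_ball (x y : E) (r : R) : `|x - y| < r -> ball x r y.
Proof. by rewrite -ball_normE. Qed.

Lemma lsc_addnorm (K : E -> \bar R) (x : E) (rho : R) : 0 < rho ->
  lower_semicontinuous K ->
  lower_semicontinuous (fun y => K y + (rho * `|y - x|)%:E)%E.
Proof.
move=> rho0 lscK y a.
set g := rho * `|y - x|.
move=> ha.
have [d [d0 hd]] : exists d, 0 < d /\ ((a - g + d)%:E < K y)%E.
  move: ha; case: (K y) => [ky| |] //=.
    rewrite -EFinD lte_fin => h; exists ((ky + g - a) / 2); split.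
      by rewrite divr_gt0 // subr_gt0.
    rewrite lte_fin; lra.
  by move=> _; exists 1; split => //; exact: ltry.
have [V1 nV1 hV1] := lscK y _ hd.
exists (V1 `&` ball y (d / rho)).
  by apply: filterI => //; apply: nbhsx_ballx; rewrite divr_gt0.
move=> z [/hV1 h1 /ball_lt h2].
have h3 : g - d < rho * `|z - x|.
  have : `|y - x| <= `|y - z| + `|z - x| by apply: ler_distD.
  rewrite /g; move: h2; rewrite ltr_pdivlMr // => h2 h4; nra.
move: h1; case: (K z) => [kz h1| _|] //=.
  by move: h1; rewrite -EFinD !lte_fin; lra.
by rewrite addye ?ltry.
Qed.

Lemma ekeland (K : E -> \bar R) (rho : R) (v : E) : 0 < rho ->
  lower_semicontinuous K -> (forall y, 0 <= K y)%E -> K v \is a fin_num ->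
  exists s, (K s + (rho * `|s - v|)%:E <= K v)%E /\
            forall y, (K s <= K y + (rho * `|y - s|)%:E)%E.
Proof.
move=> rho0 lscK K0 Kv.
pose S x y := (K y + (rho * `|y - x|)%:E <= K x)%E.
have Kninf y : K y != -oo%E by apply: contraTneq (K0 y) => ->.
have Sfin x y : K x \is a fin_num -> S x y -> K y \is a fin_num.
  move=> fx; rewrite /S -(fineK fx) => h.
  apply: (@ereal_fin_le _ _ (fine (K x)) (Kninf _)); apply: le_trans h.
  by rewrite leeDl // lee_fin mulr_ge0 // ltW.
have Sfine x y : K x \is a fin_num -> S x y ->
    fine (K y) + rho * `|y - x| <= fine (K x).
  move=> fx Sxy; have fy := Sfin _ _ fx Sxy.
  by move: Sxy; rewrite /S -(fineK fx) -(fineK fy) -EFinD lee_fin.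
have Sfine' x y : K x \is a fin_num -> K y \is a fin_num ->
    fine (K y) + rho * `|y - x| <= fine (K x) -> S x y.
  by move=> fx fy h; rewrite /S -(fineK fx) -(fineK fy) -EFinD lee_fin.
have Srefl x : S x x by rewrite /S subrr normr0 mulr0 adde0.
have Strans x y z : K x \is a fin_num -> S x y -> S y z -> S x z.
  move=> fx Sxy Syz; have fy := Sfin _ _ fx Sxy; have fz := Sfin _ _ fy Syz.
  apply: Sfine' => //; have h1 := Sfine _ _ fx Sxy; have h2 := Sfine _ _ fy Syz.
  have : `|z - x| <= `|z - y| + `|y - x| by apply: ler_distD.
  move=> h3; nra.
have step x (n : nat) : exists y, K x \is a fin_num ->
    S x y /\ forall z, S x z -> fine (K y) <= fine (K z) + n.+1%:R^-1.
  have [fx|nfx] := boolP (K x \is a fin_num); last by exists x.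
  pose A := [set fine (K z) | z in S x].
  have Ane : A !=set0 by exists (fine (K x)), x.
  have Ahl : has_lbound A.
    exists 0 => _ [z Sz <-]; have fz := Sfin _ _ fx Sz.
    by rewrite -lee_fin (fineK fz).
  have [_ [y Sy <-] hy] := inf_adherent (ltac:(by rewrite invr_gt0 ltr0n) : 0 < n.+1%:R^-1) (conj Ane Ahl).
  exists y => _; split => // z Sz.
  have : inf A <= fine (K z) by apply: ge_inf => //; exists z.
  move: hy; set ee := (n.+1%:R^-1 : R); set ia := inf A; move=> hy h; lra.
pose nxt x n := projT1 (cid (step x n)).
have nxtP x n : K x \is a fin_num -> S x (nxt x n) /\
    forall z, S x z -> fine (K (nxt x n)) <= fine (K z) + n.+1%:R^-1.
  exact: (projT2 (cid (step x n))).
pose u := nat_rect (fun _ => E) v (fun m um => nxt um m).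
have uS n : u n.+1 = nxt (u n) n by [].
have ufin n : K (u n) \is a fin_num.
  elim: n => [//|n IH]; rewrite uS; exact: Sfin _ _ IH (nxtP _ _ IH).1.
have unest n m : (n <= m)%N -> S (u n) (u m).
  move=> /subnK <-; elim: (m - n)%N => [|k IH]; first by rewrite add0n.
  rewrite addSn uS; apply: Strans IH _ => //; exact: (nxtP _ _ (ufin _)).1.
have key n z : S (u n.+1) z -> rho * `|z - u n.+1| <= n.+1%:R^-1.
  move=> Sz.
  have Snz : S (u n) z by apply: Strans (ufin _) _ Sz; rewrite uS; exact: (nxtP _ _ (ufin _)).1.
  have h1 : fine (K (u n.+1)) <= fine (K z) + n.+1%:R^-1 := (nxtP _ _ (ufin n)).2 _ Snz.
  have h2 := Sfine _ _ (ufin _) Sz; move: h1 h2; set ee := (n.+1%:R^-1 : R).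
  set a1 := fine (K (u n.+1)); set a2 := fine (K z); set a3 := `|z - u n.+1|.
  move=> h1 h2; lra.
have keyd n z : S (u n.+1) z -> `|z - u n.+1| <= n.+1%:R^-1 / rho.
  by move=> /key h; rewrite ler_pdivlMr // mulrC.
have small e : 0 < e -> exists n : nat, n.+1%:R^-1 / rho < e.
  move=> e0; exists (Num.Def.archi_bound ((e * rho)^-1)).
  have h := archi_boundP (ltW (ltac:(by rewrite invr_gt0 mulr_gt0) : 0 < (e * rho)^-1)).
  rewrite ltr_pdivrMr // invf_plt ?posrE ?ltr0n ?mulr_gt0 //.
  by apply: (lt_trans h); rewrite ltr_nat.
have ucvg : cvg (u @ \oo).
  apply/cauchy_cvgP/cauchy_exP => e e0.
  have [n hn] := small e e0.
  exists (u n.+1); exists n.+1 => // m /= hm.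
  apply: lt_ball; rewrite distrC; apply: le_lt_trans hn.
  by apply: keyd; apply: unest.
set s := lim (u @ \oo).
have us : u @ \oo --> s by exact: ucvg.
have sS n : S (u n) s.
  apply/negPn/negP; rewrite /S -ltNge => hlt.
  have [V nV hV] := lsc_addnorm _ (u n) _ rho0 lscK s (fine (K (u n))) (ltac:(by rewrite fineK)).
  have [N _ hN] := us V nV.
  have := hV (u (maxn N n)) (hN _ (leq_maxl _ _)).
  rewrite fineK // ltNge; apply/negP/negPn; apply: unest; exact: leq_maxr.
exists s; split; first exact: (sS 0%N).
move=> y; rewrite leNgt; apply/negP => hlt.
have Ssy : S s y by rewrite /S ltW.
have fs : K s \is a fin_num by exact: Sfin _ _ (ufin 0%N) (sS 0%N).
have Sny n : S (u n) y by apply: Strans (ufin _) (sS n) Ssy.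
have yes : `|y - s| <= 0.
  apply/ler_addgt0Pr => e e0; rewrite add0r.
  have [n hn] := small (e / 2) (ltac:(by rewrite divr_gt0)).
  have h1 := keyd n y (Sny _); have h2 := keyd n s (sS _).
  have : `|y - s| <= `|y - u n.+1| + `|u n.+1 - s| by apply: ler_distD.
  rewrite [`|u n.+1 - s|]distrC => h3; move: h1 h2 h3 hn; set w := n.+1%:R^-1 / rho.
  set d1 := `|y - u n.+1|; set d2 := `|s - u n.+1|; set d3 := `|y - s|; move=> h1 h2 h3 hn; lra.
have : y = s by apply/eqP; rewrite -subr_eq0 -normr_le0.
move=> eys; move: hlt; rewrite eys subrr normr0 mulr0 adde0 ltxx //.
Qed.

End P3.


Section P4.
Context {R : realType} {E : normedModType R}.

Definition affine (phi : E -> R) := forall x y t,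
  phi (t *: x + (1 - t) *: y) = t * phi x + (1 - t) * phi y.

Lemma convex_convo (f : E -> \bar R) : convex_efun f -> convo f.
Proof. by move=> cf x y t /andP[t0 t1]; apply: cf; rewrite !ltW. Qed.

Lemma G1 (f : E -> \bar R) (phi l : E -> R) (V : R) :
  (forall y, f y != -oo%E) -> convo f -> affine phi -> affine l ->
  (forall y, l y <= 0 -> (V%:E <= f y - (phi y)%:E)%E) ->
  (exists v0, l v0 < 0 /\ f v0 \is a fin_num) ->
  exists mu, 0 <= mu /\ forall y, (V%:E <= f y - (phi y - mu * l y)%:E)%E.
Proof.
move=> fninf cf aphi al hV [v0 [lv0 fv0]].
have hVr y : l y <= 0 -> f y \is a fin_num -> V <= fine (f y) - phi y.
  by move=> ly fy; have := hV y ly; rewrite -(fineK fy) -EFinB lee_fin.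
pose Sl := [set r | exists v, l v < 0 /\ f v \is a fin_num /\
                     r = (fine (f v) - phi v - V) / (- l v)].
have Slne : Sl !=set0 by exists ((fine (f v0) - phi v0 - V) / (- l v0)), v0.
have Sl0 : lbound Sl 0.
  move=> _ [v [lv [fv ->]]]; apply: divr_ge0; last by rewrite oppr_ge0 ltW.
  by rewrite subr_ge0; apply: hVr => //; rewrite ltW.
have Slhl : has_lbound Sl by exists 0.
pose mu := inf Sl.
have mu0 : 0 <= mu by apply: lb_le_inf.
exists mu; split => // y.
have [fy|] := boolP (f y \is a fin_num); last first.
  by rewrite fin_numE fninf /= negbK => /eqP ->; rewrite addye ?leey.
rewrite -(fineK fy) -EFinB lee_fin.
set A := fine (f y) - phi y.
have -> : fine (f y) - (phi y - mu * l y) = A + mu * l y by rewrite /A; lra.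
have [ly|ly|ly] := ltgtP (l y) 0.
- have : mu <= (fine (f y) - phi y - V) / (- l y).
    by apply: ge_inf => //; exists y.
  rewrite ler_pdivlMr ?oppr_gt0 // -/A => h; nra.
- set p := l y.
  have hle : (V - A) / p <= mu.
    apply: lb_le_inf => // _ [v [lv [fv ->]]].
    set q := - l v.
    have q0 : 0 < q by rewrite oppr_gt0.
    have pq0 : 0 < p + q by rewrite addr_gt0.
    pose t := q / (p + q).
    have t01 : 0 < t < 1.
      by apply/andP; split; [rewrite divr_gt0|rewrite ltr_pdivrMr // mul1r ltrDr].
    pose w := t *: y + (1 - t) *: v.
    have lw : l w = 0.
      rewrite /w al /t.
      have -> : l v = - q by rewrite /q opprK.
      by rewrite -/p; field; rewrite gt_eqF.
    have hfw := cf y v t t01; rewrite -/w -(fineK fy) -(fineK fv) -!EFinM -EFinD in hfw.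
    have fw := ereal_fin_le _ _ (fninf w) hfw.
    have h1 := hVr w (ltac:(by rewrite lw)) fw.
    rewrite -(fineK fw) lee_fin in hfw.
    rewrite /w aphi -/w in h1.
    set B := fine (f v) - phi v.
    have h2 : V <= t * A + (1 - t) * B by rewrite /A /B; lra.
    have h3 : (p + q) * V <= q * A + p * B.
      have := ler_wpM2l (ltW pq0) h2.
      have -> : (p + q) * (t * A + (1 - t) * B) = q * A + p * B.
        by rewrite /t; field; rewrite gt_eqF.
      by [].
    rewrite ler_pdivrMr // mulrAC ler_pdivlMr // -/B.
    nra.
  move: hle; rewrite ler_pdivrMr // => h; lra.
- by rewrite ly mulr0 addr0; apply: hVr => //; rewrite ly.
Qed.

End P4.


Section P5.
Context {R : realType} {E : normedModType R}.
Implicit Types (f : E -> \bar R) (a xs : E -> R) (b : (E -> R) -> R).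

Lemma ereal_cases (x : \bar R) : x != -oo%E -> x \is a fin_num \/ x = +oo%E.
Proof. by case: x => [r| |] //= _; [left|right]. Qed.

Lemma dual_lin {a} : is_dual a -> linf a.
Proof. by case. Qed.

Lemma dual_bound {a} : is_dual a -> exists M, 0 <= M /\ forall x, `|a x| <= M * `|x|.
Proof.
move=> [_ [M hM]]; exists `|M|; split => // x.
by apply: le_trans (hM x) _; rewrite ler_wpM2r // ler_norm.
Qed.

Lemma dual_lc {a xs} (al be : R) : is_dual a -> is_dual xs ->
  is_dual (fun y => al * a y + be * xs y).
Proof.
move=> ha hx; split.
  move=> c x y; rewrite !(dual_lin ha) !(dual_lin hx); ring.
have [Ma [Ma0 hMa]] := dual_bound ha; have [Mx [Mx0 hMx]] := dual_bound hx.
exists (`|al| * Ma + `|be| * Mx) => x.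
apply: le_trans (ler_normD _ _) _; rewrite !normrM mulrDl -!mulrA.
by apply: lerD; apply: ler_wpM2l.
Qed.

Lemma dual_ext {a xs} : is_dual a -> (forall y, a y = xs y) -> is_dual xs.
Proof. by move=> ha e; have -> : xs = a by apply: funext => y; rewrite e. Qed.

Lemma dual_affine {a} (c : R) : is_dual a -> affine (fun y => a y + c).
Proof.
move=> ha x y t; rewrite (linfD _ _ _ (dual_lin ha)) !(linfZ _ _ _ (dual_lin ha)); ring.
Qed.

Lemma bidual_lc {b a xs} (al be : R) : is_bidual b -> is_dual a -> is_dual xs ->
  b (fun y => al * a y + be * xs y) = al * b a + be * b xs.
Proof.
move=> [hb _] ha hx.
have hxs : is_dual (fun y => be * xs y) by apply: (dual_ext (dual_lc 0 be ha hx)) => y; ring.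
rewrite (hb al a (fun y => be * xs y)) //.
have h0 : is_dual (fun _ : E => 0) by apply: (dual_ext (dual_lc 0 0 ha hx)) => y; ring.
have := hb be xs (fun _ => 0) hx h0.
have -> : (fun x => be * xs x + 0) = (fun y => be * xs y) by apply: funext => y; ring.
move=> ->.
have := hb 1 (fun _ => 0) (fun _ => 0) h0 h0.
have -> : (fun _ : E => 1 * 0 + 0) = (fun _ : E => (0:R)) by apply: funext => y; ring.
move=> h; have -> : b (fun _ => 0) = 0 by lra.
by rewrite addr0.
Qed.

Lemma bidual_bound b : is_bidual b -> exists M, 0 <= M /\
  forall z (r : R), is_dual z -> 0 < r -> (forall y, `|z y| <= r * `|y|) -> `|b z| <= r * M.
Proof.
move=> hb; have [_ [M hM]] := hb.
exists `|M|; split => // z r hz r0 hzr.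
have hz' : is_dual (fun y => r^-1 * z y + 0 * z y) by apply: dual_lc.
have := hM _ hz'.
have hh : forall x, `|r^-1 * z x + 0 * z x| <= `|x|.
  move=> x; rewrite mul0r addr0 normrM gtr0_norm ?invr_gt0 //.
  by rewrite ler_pdivrMl // mulrC -ler_pdivrMr // -mulrC mulKf ?gt_eqF //; apply: hzr.
move=> /(_ hh); rewrite (bidual_lc _ _ hb hz hz) mul0r addr0 normrM gtr0_norm ?invr_gt0 //.
rewrite ler_pdivrMl // => h; apply: le_trans h _; rewrite ler_wpM2l ?(ltW r0) //.
exact: ler_norm.
Qed.

Lemma fconj_ub f xs x : ((xs x)%:E - f x <= fconj f xs)%E.
Proof. by apply: ereal_sup_ubound; exists x. Qed.

Lemma fconj_le f xs M : (forall x, ((xs x)%:E - f x <= M)%E) -> (fconj f xs <= M)%E.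
Proof. by move=> h; apply: ge_ereal_sup => _ [x _ <-]; apply: h. Qed.

Lemma fbiconj_ub f b xs : is_dual xs -> ((b xs)%:E - fconj f xs <= fbiconj f b)%E.
Proof. by move=> hx; apply: ereal_sup_ubound; exists xs. Qed.

Lemma fbiconj_le f b M : (forall xs, is_dual xs -> ((b xs)%:E - fconj f xs <= M)%E) ->
  (fbiconj f b <= M)%E.
Proof. by move=> h; apply: ge_ereal_sup => _ [xs hx <-]; apply: h. Qed.

Lemma fconj_ninf f xs : proper_fun f -> fconj f xs != -oo%E.
Proof.
move=> [fn [x0 fx0]].
have fin0 : f x0 \is a fin_num by rewrite fin_numE fn.
have := fconj_ub f xs x0; rewrite -(fineK fin0) -EFinB.
by case: (fconj f xs).
Qed.

Lemma fconj_fin_le {f} xs {x} : f x \is a fin_num -> fconj f xs \is a fin_num ->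
  xs x - fine (f x) <= fine (fconj f xs).
Proof.
by move=> fx fc; have := fconj_ub f xs x; rewrite -(fineK fx) -(fineK fc) -EFinB lee_fin.
Qed.

Lemma sub_le_fin {F : \bar R} (c : R) {r : R} : (F <= r%:E)%E -> ((c - r)%:E <= c%:E - F)%E.
Proof.
case: F => [F| |] //=; last by move=> _; rewrite addey ?leey.
by rewrite -EFinB !lee_fin => h; lra.
Qed.

Lemma approx_le (X : \bar R) (r : R) :
  (forall e, 0 < e -> ((r - e)%:E <= X)%E) -> (r%:E <= X)%E.
Proof.
case: X => [X| |] h.
- rewrite lee_fin; apply/ler_addgt0Pr => e e0; have := h e e0; rewrite lee_fin; lra.
- exact: leey.
- by have := h 1 ltr01.
Qed.

Lemma subgrad_graph {f s ss} : f s \is a fin_num -> is_dual ss ->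
  (forall y, (f s + (ss (y - s))%:E <= f y)%E) ->
  fconj f ss = (ss s - fine (f s))%:E.
Proof.
move=> fs hss hsub; apply/eqP; rewrite eq_le; apply/andP; split.
  apply: fconj_le => y.
  have := hsub y; rewrite (linfB _ _ _ (dual_lin hss)) -(fineK fs) -EFinD.
  case: (f y) => [fy| |] //=.
    by rewrite lee_fin -EFinB lee_fin => h; lra.
  by rewrite addeNy leNye.
by have := fconj_ub f ss s; rewrite -(fineK fs) -EFinB.
Qed.

Lemma graph_fin {f s ss} : proper_fun f -> subdiff_graph f s ss ->
  f s \is a fin_num /\ fconj f ss \is a fin_num.
Proof.
move=> pf [hss he].
have : (f s + fconj f ss)%E \is a fin_num by rewrite he.
by rewrite fin_numD => /andP.
Qed.

Lemma fitz_le_sum {f x xs} : proper_fun f -> f x \is a fin_num -> fconj f xs \is a fin_num ->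
  (fitz (subdiff_graph f) x xs <= (fine (f x) + fine (fconj f xs))%:E)%E.
Proof.
move=> pf fx fc; apply: ge_ereal_sup => _ [[s ss] /= hG <-].
have [fs fss] := graph_fin pf hG.
have [_ he] := hG.
have e1 : fine (f s) + fine (fconj f ss) = ss s.
  by move: he; rewrite -(fineK fs) -(fineK fss) -EFinD => -[].
have h1 := fconj_fin_le ss fx fss.
have h2 := fconj_fin_le xs fs fc.
rewrite lee_fin; lra.
Qed.

Lemma fitz_conj_lb f a b x xs : proper_fun f -> is_dual xs ->
  f x \is a fin_num -> fconj f xs \is a fin_num ->
  ((a x - fine (f x) + b xs - fine (fconj f xs))%:E <= fitz_conj (subdiff_graph f) a b)%E.
Proof.
move=> pf hx fx fc.
apply: le_trans (ereal_sup_ubound _) ; last by exists (x, xs).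
have := sub_le_fin (a x + b xs) (fitz_le_sum pf fx fc).
by apply: le_trans; rewrite lee_fin; lra.
Qed.

End P5.


Section P6.
Context {R : realType} {E : normedModType R}.
Implicit Types (f : E -> \bar R) (a xs : E -> R) (b : (E -> R) -> R).

Lemma ball_lt' (x y : E) (r : R) : ball x r y -> `|x - y| < r.
Proof. by rewrite -ball_normE. Qed.

Definition Kfun f a (l : E -> R) (m : R) (y : E) : \bar R :=
  if l y <= 0 then (f y - (a y - m)%:E)%E else +oo%E.

Lemma dual_lip {a} : is_dual a -> exists M, 0 <= M /\ forall y z, `|a z - a y| <= M * `|y - z|.
Proof.
move=> ha; have [M [M0 hM]] := dual_bound ha; exists M; split => // y z.
by rewrite -(linfB _ _ _ (dual_lin ha)) distrC hM.
Qed.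

Lemma Kfun_ninf f a l m y : (forall z, f z != -oo%E) -> Kfun f a l m y != -oo%E.
Proof.
move=> fn; rewrite /Kfun; case: ifP => // _.
by move: (fn y); case: (f y).
Qed.

Lemma lsc_Kfun f a l m : lower_semicontinuous f -> is_dual a ->
  (exists M, 0 <= M /\ forall y z, `|l z - l y| <= M * `|y - z|) ->
  lower_semicontinuous (Kfun f a l m).
Proof.
move=> lscf ha [Ml [Ml0 hMl]] y r.
have [Ma [Ma0 hMa]] := dual_lip ha.
rewrite /Kfun; case: (leP (l y) 0) => ly hr.
- have [d [d0 hd]] : exists d, 0 < d /\ ((r + (a y - m) + d)%:E < f y)%E.
    move: hr; case: (f y) => [fy| |] //=.
      rewrite -EFinB lte_fin => h; exists ((fy - (a y - m) - r) / 2); split.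
        by rewrite divr_gt0 // subr_gt0.
      rewrite lte_fin; lra.
    by move=> _; exists 1; split => //; exact: ltry.
  have [V1 nV1 hV1] := lscf y _ hd.
  exists (V1 `&` ball y (d / (Ma + 1))).
    apply: filterI => //; apply: nbhsx_ballx; rewrite divr_gt0 //.
    by rewrite ltr_pwDr.
  move=> z [/hV1 h1 /ball_lt' h2].
  have h3 : `|a z - a y| < d.
    apply: le_lt_trans (hMa _ _) _.
    move: h2; rewrite ltr_pdivlMr ?ltr_pwDr // => h2.
    have : 0 <= `|y - z| by [].
    move=> h4; nra.
  have h5 : r < fine (f z) - (a z - m) \/ f z = +oo%E.
    move: h1; case: (f z) => [fz| |] //=; last by right.
    rewrite lte_fin => h1; left; move: h3; rewrite ltr_norml => /andP[h3 h3']; lra.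
  case: ifP => _; last exact: ltry.
  move: h1 h5; case: (f z) => [fz| |] //= _.
    by case => [h5|//]; rewrite -EFinD lte_fin.
  by move=> _; rewrite addye ?ltry.
- exists (ball y (l y / (Ml + 1))).
    by apply: nbhsx_ballx; rewrite divr_gt0 // ltr_pwDr.
  move=> z /ball_lt' h2; case: ifP => // hz; exfalso.
  have h3 := hMl y z.
  move: h2; rewrite ltr_pdivlMr ?ltr_pwDr // => h2.
  have h4 : l y - l z <= Ml * `|y - z|.
    by apply: le_trans h3; rewrite distrC ler_norm.
  have h6 : 0 <= `|y - z| by [].
  move: hz; rewrite leNgt => /negP; apply.
  nra.
Qed.

Lemma rhs_inf (X Y : \bar R) (t : R) : 0 < t < 1 -> X != -oo%E -> Y != -oo%E ->
  (X = +oo%E \/ Y = +oo%E) -> (t%:E * X + (1 - t)%:E * Y = +oo)%E.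
Proof.
move=> /andP[t0 t1] hX hY [->|->].
- rewrite mulry gtr0_sg // mul1e addye //.
  by move: hY; case: Y => [y| |] //= _; first [by rewrite -EFinM | by rewrite mulry gtr0_sg ?subr_gt0 // mul1e].
- rewrite mulry gtr0_sg ?subr_gt0 // mul1e addey //.
  by move: hX; case: X => [y| |] //= _; first [by rewrite -EFinM | by rewrite mulry gtr0_sg // mul1e].
Qed.

End P6.


Section P7.
Context {R : realType} {E : normedModType R}.
Implicit Types (f : E -> \bar R) (a xs : E -> R) (b : (E -> R) -> R).

Lemma convo_K f a l m : convo f -> (forall y, f y != -oo%E) -> is_dual a -> affine l ->
  convo (Kfun f a l m).
Proof.
move=> cf fn ha al x y t t01.
have Kn z : Kfun f a l m z != -oo%E by apply: Kfun_ninf.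
have Kx := Kn x; have Ky := Kn y.
rewrite {1}/Kfun (al x y t).
have [t0 t1] := andP t01.
case: (leP (l x) 0) => lx; last by rewrite rhs_inf // ?leey //; left; rewrite /Kfun leNgt lx.
case: (leP (l y) 0) => ly; last by rewrite rhs_inf // ?leey //; right; rewrite /Kfun leNgt ly.
have hw : t * l x + (1 - t) * l y <= 0 by nra.
rewrite hw /Kfun lx ly.
have Fn z : (f z - (a z - m)%:E != -oo)%E by move: (fn z); case: (f z).
have [fx|fx] := ereal_cases _ (fn x); last first.
  by rewrite (rhs_inf _ _ _ t01 (Fn x) (Fn y)) ?leey //; left; rewrite fx addye.
have [fy|fy] := ereal_cases _ (fn y); last first.
  by rewrite (rhs_inf _ _ _ t01 (Fn x) (Fn y)) ?leey //; right; rewrite fy addye.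
have hc := cf x y t t01; rewrite -(fineK fx) -(fineK fy) -!EFinM -EFinD in hc.
have fw := ereal_fin_le _ _ (fn _) hc.
rewrite -(fineK fw) lee_fin in hc.
rewrite -(fineK fx) -(fineK fy) -(fineK fw) -!EFinB -!EFinM -EFinD lee_fin.
rewrite (linfD _ _ _ (dual_lin ha)) !(linfZ _ _ _ (dual_lin ha)).
nra.
Qed.

End P7.


Section P8.
Context {R : realType} {E : completeNormedModType R}.
Implicit Types (f : E -> \bar R) (a xs : E -> R) (b : (E -> R) -> R).

Lemma dual_affine0 {a} : is_dual a -> affine a.
Proof.
move=> ha x y t; rewrite (linfD _ _ _ (dual_lin ha)) !(linfZ _ _ _ (dual_lin ha)) //.
Qed.

Lemma core f a b m x xs eps :
  proper_fun f -> convex_efun f -> lower_semicontinuous f ->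
  is_dual a -> is_bidual b -> fconj f a = m%:E ->
  (forall w, is_dual w -> ((m + b w - b a)%:E <= fconj f w)%E) ->
  is_dual xs -> 0 < eps ->
  exists s ss, subdiff_graph f s ss /\ a x + b xs - b a - eps <= ss x + xs s - ss s.
Proof.
move=> pf cf lscf ha hb hm bineq hxs eps0.
have [fn _] := pf.
have cof := convex_convo _ cf.
pose a' := fun y => a y - xs y.
have ha' : is_dual a' by apply: (dual_ext (dual_lc 1 (-1) ha hxs)) => y; rewrite /a'; ring.
have ba' : b a' = b a - b xs.
  have -> : a' = (fun y => 1 * a y + (-1) * xs y) by apply: funext => y; rewrite /a'; ring.
  rewrite (bidual_lc 1 (-1) hb ha hxs); ring.
pose c := b a - a x - b xs + xs x.
pose e1 := eps / 2.
have e10 : 0 < e1 by rewrite divr_gt0.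
pose beta := c + e1.
pose l := fun y => a' y + (- a' x - beta).
have al : affine l := dual_affine _ ha'.
have hfa y : f y \is a fin_num -> a y - fine (f y) <= m.
  by move=> fy; have := fconj_ub f a y; rewrite hm -(fineK fy) -EFinB lee_fin.
clear hm.
have slater : exists v0, l v0 < 0 /\ f v0 \is a fin_num.
  apply: contrapT => hns.
  have hge v : f v \is a fin_num -> 0 <= l v.
    by move=> fv; rewrite leNgt; apply/negP => lv; apply: hns; exists v.
  have h1 : (fconj f xs <= (m - a' x - beta)%:E)%E.
    apply: fconj_le => y; have [fy|fy] := ereal_cases _ (fn y); last by rewrite fy addeNy leNye.
    rewrite -(fineK fy) -EFinB lee_fin.
    have := hfa y fy; have := hge y fy; rewrite /l /a' => h2 h3; lra.
  have := le_trans (bineq xs hxs) h1; rewrite lee_fin /beta /c /a' /e1 => h; clear h1; lra.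
have [Mb [Mb0 hMb]] := bidual_bound _ hb.
pose D := (2 + Mb) * (`|beta| + 1) / e1 + 3.
have D0 : 0 < D by rewrite /D ltr_pwDr // divr_ge0 ?(ltW e10) // mulr_ge0 // addr_ge0.
pose eta := e1 / D.
have eta0 : 0 < eta by rewrite divr_gt0.
have etaD : eta * D = e1 by rewrite /eta mulfVK ?gt_eqF.
have [v [lv [fv hv]]] : exists v, l v <= 0 /\ f v \is a fin_num /\ m - eta < a v - fine (f v).
  apply: contrapT => hno.
  have hyp : forall y, l y <= 0 -> ((eta - m)%:E <= f y - (a y)%:E)%E.
    move=> y ly; have [fy|fy] := ereal_cases _ (fn y); last by rewrite fy addye ?leey.
    rewrite -(fineK fy) -EFinB lee_fin.
    rewrite leNgt; apply/negP => h; apply: hno; exists y; split => //; split => //; lra.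
  have [mu [mu0 hmu]] := G1 _ _ _ _ fn cof (dual_affine0 ha) al hyp slater.
  pose w := fun y => (- mu) * a' y + 1 * a y.
  have hw : is_dual w by apply: dual_lc.
  have bw : b w = - mu * b a' + 1 * b a by apply: bidual_lc.
  have h1 : (fconj f w <= (m - eta - mu * (a' x + beta))%:E)%E.
    apply: fconj_le => y; have [fy|fy] := ereal_cases _ (fn y); last by rewrite fy addeNy leNye.
    have := hmu y; rewrite -(fineK fy) -!EFinB lee_fin /w /l => h.
    rewrite lee_fin; nra.
  have := le_trans (bineq w hw) h1; rewrite lee_fin bw ba' /beta /c /a' => h.
  nra.

pose K := Kfun f a l m.
have Kninf y : K y != -oo%E by apply: Kfun_ninf.
have K0 y : (0 <= K y)%E.
  rewrite /K /Kfun; case: ifP => _; last exact: leey.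
  have [fy|fy] := ereal_cases _ (fn y); last by rewrite fy addye.
  rewrite -(fineK fy) -EFinB lee_fin; have := hfa y fy; lra.
have Klsc : lower_semicontinuous K.
  apply: lsc_Kfun => //.
  have [Ml [Ml0 hMl]] := dual_lip ha'; exists Ml; split => // y z.
  have -> : l z - l y = a' z - a' y by rewrite /l; ring.
  exact: hMl.
have Kvf : K v \is a fin_num by rewrite /K /Kfun lv -(fineK fv) -EFinB.
have Kvlt : fine (K v) < eta.
  by rewrite /K /Kfun lv -(fineK fv) -EFinB /=; lra.
pose lam := `|v| + `|x| + 1.
have lam1 : 1 <= lam by rewrite /lam lerDr addr_ge0.
have lam0 : 0 < lam by apply: lt_le_trans lam1.
pose rho := eta / lam.
have rho0 : 0 < rho by rewrite divr_gt0.
have rholam : rho * lam = eta by rewrite /rho mulfVK ?gt_eqF.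
have [s [hs1 hs2]] := ekeland _ _ _ rho0 Klsc K0 Kvf.
have Ksf : K s \is a fin_num.
  apply: (@ereal_fin_le _ _ (fine (K v)) (Kninf _)); rewrite (fineK Kvf).
  by apply: le_trans hs1; rewrite leeDl // lee_fin mulr_ge0 // ltW.
have ls : l s <= 0.
  by move: Ksf; rewrite /K /Kfun; case: ifP.
have fs : f s \is a fin_num.
  move: Ksf; rewrite /K /Kfun ls fin_numD => /andP[] //.
have Ksv : fine (K s) = fine (f s) - (a s - m).
  by rewrite /K /Kfun ls -(fineK fs) -EFinB.
have hsv : `|s - v| < lam.
  move: hs1; rewrite -(fineK Kvf) -(fineK Ksf) -EFinD lee_fin => h.
  have h0 : 0 <= fine (K s) by rewrite -lee_fin (fineK Ksf).
  have : rho * `|s - v| < rho * lam by rewrite rholam; lra.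
  by rewrite ltr_pM2l.
have [z [zlin [zb zsub]]] := sandwich _ _ _ rho0 (convo_K _ _ _ m cof fn ha al) Kninf Ksf hs2.
have hz : is_dual z by split => //; exists rho.
have haz : is_dual (fun y => a y + z y).
  by apply: (dual_ext (dual_lc 1 1 ha hz)) => y; ring.
pose V2 := fine (f s) - a s - z s.
have hyp2 : forall y, l y <= 0 -> (V2%:E <= f y - (a y + z y)%:E)%E.
  move=> y ly; have [fy|fy] := ereal_cases _ (fn y); last by rewrite fy addye ?leey.
  have := zsub y; rewrite -/K -(fineK Ksf) Ksv /K /Kfun ly -(fineK fy) -!EFinB -EFinD !lee_fin.
  rewrite (linfB _ _ _ zlin) /V2 => h; lra.
have [nu [nu0 hnu]] := G1 _ _ _ _ fn cof (dual_affine0 haz) al hyp2 slater.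
have hnus : nu * l s = 0.
  have := hnu s; rewrite -(fineK fs) -EFinB lee_fin /V2 => h.
  apply/eqP; rewrite eq_le; apply/andP; split; first by rewrite mulr_ge0_le0.
  lra.
pose ss := fun y => a y + z y - nu * a' y.
have hss : is_dual ss by apply: (dual_ext (dual_lc 1 (- nu) haz ha')) => y; rewrite /ss; ring.
have hsub : forall y, (f s + (ss (y - s))%:E <= f y)%E.
  move=> y; have [fy|fy] := ereal_cases _ (fn y); last by rewrite fy leey.
  have := hnu y; rewrite -(fineK fy) -EFinB lee_fin /V2 => h.
  rewrite (linfB _ _ _ (dual_lin hss)) -(fineK fs) -EFinD lee_fin /ss.
  move: h hnus; rewrite /l !mulrDr => h hnus'; lra.
have hfc := subgrad_graph fs hss hsub.
have hG : subdiff_graph f s ss.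
  split => //; rewrite hfc -(fineK fs) -EFinD; congr (_%:E); ring.
exists s, ss; split => //.
have bss : b ss = b a + b z - nu * b a'.
  have -> : ss = (fun y => 1 * (a y + z y) + (- nu) * a' y).
    by apply: funext => y; rewrite /ss; ring.
  rewrite (bidual_lc 1 (- nu) hb haz ha').
  have -> : (fun y => a y + z y) = (fun y => 1 * a y + 1 * z y) by apply: funext => y; ring.
  rewrite (bidual_lc 1 1 hb ha hz); ring.
have F2 : m + b ss - b a <= ss s - fine (f s).
  by have := bineq ss hss; rewrite hfc lee_fin.
have hfas := hfa s fs.
have hbz : `|b z| <= rho * Mb by apply: hMb => //.
have hzs : `|z s| <= rho * `|s| by apply: zb.
have hzsx : `|z (s - x)| <= rho * `|s - x| by apply: zb.
have hns : `|s| <= `|s - v| + `|v|.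
  by have := ler_distD v s 0; rewrite !subr0.
have hnsx : `|s - x| <= `|s| + `|x| by apply: ler_normB.
clear hfc zsub hs1 hs2 hnu hyp2 bineq.
have E1 : nu * e1 <= z s - b z.
  have h1 : b z - nu * b a' <= z s - nu * a' s.
    by move: F2; rewrite bss /ss => F2; lra.
  have h2 : nu * a' s = nu * (a' x + beta).
    by move: hnus; rewrite /l => hn; nra.
  have h3 : a' x + beta - b a' = e1 by rewrite ba' /beta /c /a'; ring.
  by rewrite -h3 mulrBr -h2; lra.
have r2 : rho <= eta by rewrite /rho ler_pdivrMr // ler_peMr // ltW.
have r1 : rho * `|s| <= 2 * eta.
  have : `|v| <= lam by rewrite /lam -addrA lerDl addr_ge0.
  move=> hv'; have : rho * `|s| <= rho * (`|s - v| + `|v|) by rewrite ler_pM2l.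
  move=> h; have : rho * (`|s - v| + `|v|) <= rho * (2 * lam).
    by rewrite ler_pM2l //; lra.
  move=> h'; rewrite -rholam; lra.
have E2 : nu * e1 <= eta * (2 + Mb).
  have : z s <= rho * `|s| by apply: le_trans (ler_norm _) hzs.
  have : - b z <= rho * Mb by apply: le_trans _ hbz; rewrite -normrN ler_norm.
  have : rho * Mb <= eta * Mb by rewrite ler_wpM2r.
  move=> h1 h2 h3; lra.
have E3 : z (s - x) <= 3 * eta.
  have : z (s - x) <= rho * `|s - x| by apply: le_trans (ler_norm _) hzsx.
  have : rho * `|x| <= eta.
    by rewrite -rholam ler_pM2l // /lam addrC addrA lerDr addr_ge0.
  have : rho * `|s - x| <= rho * (`|s| + `|x|) by rewrite ler_pM2l.
  move=> h1 h2 h3; lra.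
have E5 : nu * `|beta| <= eta * (D - 3).
  have -> : D - 3 = (2 + Mb) * (`|beta| + 1) / e1 by rewrite /D; ring.
  have hnu' : nu <= eta * (2 + Mb) / e1 by rewrite ler_pdivlMr.
  have : nu * `|beta| <= nu * (`|beta| + 1) by rewrite ler_wpM2l // lerDl.
  have : nu * (`|beta| + 1) <= eta * (2 + Mb) / e1 * (`|beta| + 1).
    by rewrite ler_wpM2r // addr_ge0.
  have -> : eta * (2 + Mb) / e1 * (`|beta| + 1) = eta * ((2 + Mb) * (`|beta| + 1) / e1).
    by rewrite mulrAC -!mulrA; congr (_ * _); rewrite mulrCA mulrA.
  move=> h1 h2; lra.
have E6 : - (nu * beta) <= nu * `|beta|.
  by rewrite -mulrN ler_wpM2l // -normrN ler_norm.
have Id : ss x + xs s - ss s = a x + b xs - b a - e1 - l s + nu * beta - z (s - x) + nu * l s.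
  by rewrite /ss /l (linfB _ _ _ zlin) /beta /c /a'; ring.
have epse : eps = 2 * e1 by rewrite /e1; field.
rewrite Id hnus epse.
have : eta * (D - 3) + 3 * eta = e1 by rewrite -etaD; ring.
move=> h; lra.
Qed.

End P8.


Theorem theorem3p7 (R : realType) (E : completeNormedModType R)
    (f : E -> \bar R) :
  (exists x : E, x != 0) ->
  proper_fun f -> convex_efun f -> lower_semicontinuous f ->
  forall (ys : E -> R) (yss : (E -> R) -> R),
    is_dual ys -> is_bidual yss ->
    (fitz_ext_graph (subdiff_graph f) ys yss <->
     (fconj f ys + fbiconj f yss = (yss ys)%:E)%E).
Proof.
move=> _ pf cf lscf a b ha hb.
have [fn _] := pf.
split.
- rewrite /fitz_ext_graph => H.
  have [s0 [ss0 hG0]] : exists s ss, subdiff_graph f s ss.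
    apply: contrapT => hne.
    have hfz : fitz (subdiff_graph f) 0 a = -oo%E.
      apply/eqP; rewrite eq_le leNye andbT; apply: ge_ereal_sup => _ [[s ss] /= hG <-].
      by exfalso; apply: hne; exists s, ss.
    have : ((a (0%R:E) + b a)%R%:E - fitz (subdiff_graph f) (0%R:E) a <= fitz_conj (subdiff_graph f) a b)%E.
      by apply: ereal_sup_ubound; exists ((0%R:E), a).
    by rewrite H hfz /= addey.
  have [fs0 fss0] := graph_fin pf hG0.
  have hss0 := hG0.1.
  have LB x xs : is_dual xs -> f x \is a fin_num -> fconj f xs \is a fin_num ->
      a x - fine (f x) + b xs - fine (fconj f xs) <= b a.
    by move=> hx fx fc; have := fitz_conj_lb f a b _ _ pf hx fx fc; rewrite H lee_fin.
  have hmle xs : is_dual xs -> fconj f xs \is a fin_num ->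
      (fconj f a <= (b a - b xs + fine (fconj f xs))%:E)%E.
    move=> hx fc; apply: fconj_le => x.
    have [fx|fx] := ereal_cases _ (fn x); last by rewrite fx addeNy leNye.
    rewrite -(fineK fx) -EFinB lee_fin; have := LB x xs hx fx fc; lra.
  have mf : fconj f a \is a fin_num.
    apply: (@ereal_fin_le _ _ _ (fconj_ninf _ _ pf)); exact: hmle hss0 fss0.
  have hn : fbiconj f b = (b a - fine (fconj f a))%:E.
    apply/eqP; rewrite eq_le; apply/andP; split.
      apply: fbiconj_le => xs hx.
      have [fc|fc] := ereal_cases _ (fconj_ninf f xs pf); last by rewrite fc addeNy leNye.
      have := hmle xs hx fc; rewrite -(fineK mf) lee_fin => h.
      by rewrite -(fineK fc) -EFinB lee_fin; lra.
    by have := fbiconj_ub f b a ha; rewrite -(fineK mf) -EFinB.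
  by rewrite hn -(fineK mf) -EFinD; congr (_%:E); ring.
- move=> H.
  have : (fconj f a + fbiconj f b)%E \is a fin_num by rewrite H.
  rewrite fin_numD => /andP[mf nf].
  have hmn : fine (fconj f a) + fine (fbiconj f b) = b a.
    by move: H; rewrite -(fineK mf) -(fineK nf) -EFinD => -[].
  have bineq w : is_dual w -> ((fine (fconj f a) + b w - b a)%:E <= fconj f w)%E.
    move=> hw; have [fc|fc] := ereal_cases _ (fconj_ninf f w pf); last by rewrite fc leey.
    have := fbiconj_ub f b w hw; rewrite -(fineK nf) -(fineK fc) -EFinB !lee_fin => h.
    lra.
  have hm : fconj f a = (fine (fconj f a))%:E by rewrite fineK.
  rewrite /fitz_ext_graph; apply/eqP; rewrite eq_le; apply/andP; split.
    apply: ge_ereal_sup => _ [[x xs] /= hx <-].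
    have hf : ((a x + b xs - b a)%:E <= fitz (subdiff_graph f) x xs)%E.
      apply: approx_le => e e0.
      have [s [ss [hG hb']]] := core f a b _ x xs e pf cf lscf ha hb hm bineq hx e0.
      apply: le_trans (ereal_sup_ubound _); last by exists (s, ss).
      by rewrite lee_fin.
    move: hf; case: (fitz (subdiff_graph f) x xs) => [F| |] //=.
      by rewrite -EFinB !lee_fin => h; lra.
    by rewrite addeNy leNye.
  apply: approx_le => e e0.
  have e20 : 0 < e / 2 by rewrite divr_gt0.
  have : ((fine (fconj f a) - e / 2)%:E < fconj f a)%E.
    by rewrite -{2}(fineK mf) lte_fin ltrBlDr ltrDl.
  move=> /ereal_sup_gt [_ [x _ <-] hx].
  have fx : f x \is a fin_num.
    have [//|fx'] := ereal_cases _ (fn x).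
    by move: hx; rewrite fx' addeNy.
  have : ((fine (fbiconj f b) - e / 2)%:E < fbiconj f b)%E.
    by rewrite -{2}(fineK nf) lte_fin ltrBlDr ltrDl.
  move=> /ereal_sup_gt [_ [xs hxs <-] hxs'].
  have fc : fconj f xs \is a fin_num.
    have [//|fc'] := ereal_cases _ (fconj_ninf f xs pf).
    by move: hxs'; rewrite fc' addeNy.
  apply: le_trans (fitz_conj_lb f a b _ _ pf hxs fx fc).
  move: hx hxs'; rewrite -(fineK fx) -(fineK fc) -!EFinB !lte_fin lee_fin => h1 h2.
  lra.
Qed.
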